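(* Let $\mathcal A,\mathcal B>0$, $\alpha,\beta\in(0,1)$, $h,\tau>0$, and for a real number $\theta$ let $s=\sin^2(\theta h/2)$, $$\mathcal Q=\Big[1-\tfrac{8}{45}s^2\Big]+4g_0^{(\alpha,\beta)}s\Big[1+\tfrac13 s\Big],\qquad \mathcal P=\Big[1-\tfrac{8}{45}s^2\Big]-4g_1^{(\alpha,\beta)}s\Big[1+\tfrac13 s\Big].$$ Then $\left|\mathcal P/\mathcal Q\right|\le1$ for every real $\theta$.
   Context: $\varpi_\ell^{(\sigma)}=(-1)^\ell\binom{\sigma}{\ell}$, $g_0^{(\sigma)}=\frac{1+\sigma}{2}\varpi_0^{(\sigma)}$, $g_\ell^{(\sigma)}=\frac{1+\sigma}{2}\varpi_\ell^{(\sigma)}+\frac{1-\sigma}{2}\varpi_{\ell-1}^{(\sigma)}$ ($\ell\ge1$); $\mu_\alpha=\tau^\alpha\mathcal A/h^2$, $\mu_\beta=\tau^\beta\mathcal B/h^2$, $g_\ell^{(\alpha,\beta)}=\mu_\alpha g_\ell^{(1-\alpha)}+\mu_\beta g_\ell^{(1-\beta)}$. *)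

(* Defs.v *)
From Stdlib Require Import Reals.
Open Scope R_scope.

Fixpoint gbinom (s : R) (l : nat) : R :=
  match l with
  | O => 1
  | S k => gbinom s k * (s - INR k) / INR (S k)
  end.

Definition varpi (sigma : R) (l : nat) : R := (-1) ^ l * gbinom sigma l.

Definition gcoef (sigma : R) (l : nat) : R :=
  match l with
  | O => (1 + sigma) / 2 * varpi sigma 0
  | S k => (1 + sigma) / 2 * varpi sigma (S k) + (1 - sigma) / 2 * varpi sigma k
  end.

Definition mu (tau a A h : R) : R := Rpower tau a * A / h ^ 2.

Definition gab (A B alpha beta h tau : R) (l : nat) : R :=
  mu tau alpha A h * gcoef (1 - alpha) l + mu tau beta B h * gcoef (1 - beta) l.

(* Main.v *)
Require Import Defs.
From Stdlib Require Import Reals Lra Psatz.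
Open Scope R_scope.

Lemma mu_pos tau a A h : 0 < tau -> 0 < A -> 0 < h -> 0 < mu tau a A h.
Proof.
  intros Ht HA Hh. unfold mu, Rpower. unfold Rdiv.
  apply Rmult_lt_0_compat; [apply Rmult_lt_0_compat; [apply exp_pos|lra]|].
  apply Rinv_0_lt_compat. apply pow_lt; lra.
Qed.

Lemma gcoef0 s : gcoef s 0 = (1 + s) / 2.
Proof. unfold gcoef, varpi; simpl; field. Qed.

Lemma gcoef1 s : gcoef s 1 = (1 - 2*s - s*s) / 2.
Proof. unfold gcoef, varpi; simpl; field. Qed.

Theorem lemma5 (A B alpha beta h tau : R) :
  0 < A -> 0 < B -> 0 < alpha < 1 -> 0 < beta < 1 -> 0 < h -> 0 < tau ->
  forall theta : R,
    let s := sin (theta * h / 2) ^ 2 in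
    let Q := (1 - 8 / 45 * s ^ 2) + 4 * gab A B alpha beta h tau 0 * s * (1 + 1 / 3 * s) in
    let P := (1 - 8 / 45 * s ^ 2) - 4 * gab A B alpha beta h tau 1 * s * (1 + 1 / 3 * s) in
    Rabs (P / Q) <= 1.
Proof.
  intros HA HB Ha Hb Hh Ht theta s Q P.
  assert (H1 := mu_pos tau alpha A h Ht HA Hh).
  assert (H2 := mu_pos tau beta B h Ht HB Hh).
  set (m1 := mu tau alpha A h) in *. set (m2 := mu tau beta B h) in *.
  assert (Hs0 : 0 <= s) by (unfold s; nra).
  assert (Hs1 : s <= 1).
  { unfold s. pose proof (sin2 (theta*h/2)). pose proof (pow2_ge_0 (cos (theta*h/2))).
    unfold Rsqr in *. simpl. nra. }
  set (D := 1 - 8/45 * s^2).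
  set (T := 4 * s * (1 + 1/3*s)).
  assert (HD : 37/45 <= D) by (unfold D; nra).
  assert (HT : 0 <= T) by (unfold T; nra).
  set (G0 := gab A B alpha beta h tau 0).
  set (G1 := gab A B alpha beta h tau 1).
  assert (E0 : G0 = m1 * ((2 - alpha)/2) + m2 * ((2-beta)/2)).
  { unfold G0, gab. rewrite !gcoef0. unfold m1, m2. field. }
  assert (E1 : G1 = m1 * ((1 - 2*(1-alpha) - (1-alpha)*(1-alpha))/2)
                  + m2 * ((1 - 2*(1-beta) - (1-beta)*(1-beta))/2)).
  { unfold G1, gab. rewrite !gcoef1. unfold m1, m2. reflexivity. }
  assert (HG0 : 0 <= G0) by (rewrite E0; nra).
  assert (HS : 0 <= G0 + G1).
  { rewrite E0, E1.
    assert (0 <= m1 * (alpha * (3 - alpha))) by (apply Rmult_le_pos; nra).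
    assert (0 <= m2 * (beta * (3 - beta))) by (apply Rmult_le_pos; nra).
    nra. }
  assert (HDf : 0 <= G0 - G1).
  { rewrite E0, E1.
    assert (0 <= m1 * ((1-alpha) * (4 - alpha))) by (apply Rmult_le_pos; nra).
    assert (0 <= m2 * ((1-beta) * (4 - beta))) by (apply Rmult_le_pos; nra).
    nra. }
  assert (EQ : Q = D + G0 * T) by (unfold Q, D, T, G0; ring).
  assert (EP : P = D - G1 * T) by (unfold P, D, T, G1; ring).
  assert (HQ : 0 < Q) by (rewrite EQ; nra).
  unfold Rdiv; rewrite Rabs_mult, Rabs_inv. rewrite (Rabs_right Q) by lra.
  apply (Rmult_le_reg_r Q); [lra|]. unfold Rdiv. rewrite Rmult_assoc, Rinv_l by lra.
  rewrite Rmult_1_r, Rmult_1_l. apply Rabs_le. split.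
  - rewrite EP, EQ. nra.
  - rewrite EP, EQ. nra.
Qed.
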